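(* If a circuit $f:a\to b$ is safe, then every polynomial in the tuple $[\![f]\!]$ has all exponents in $\{0,1\}$, i.e. contains no monomial in which some variable appears with exponent at least $2$.
   Context: A circuit is a morphism of the free symmetric strict monoidal category whose objects are natural numbers (tensor = addition) generated by $\mathsf{discard}:1\to 0$, $\mathsf{copy}:1\to 2$, $\mathsf{zero}:0\to1$, $\mathsf{add}:2\to1$, $\mathsf{one}:0\to 1$, $\mathsf{and}:2\to 1$. $[\![\cdot]\!]$ assigns to each circuit $f:a\to b$ a $b$-tuple of polynomials in $\mathbb{Z}_2[x_1,\dots,x_a]$ (genuine polynomials, $x^2\neq x$), compositionally: composition is substitution, tensor is juxtaposition with variables renumbered, symmetries permute variables, and $\mathsf{discard}\mapsto\langle\rangle$, $\mathsf{copy}\mapsto\langle x_1,x_1\rangle$, $\mathsf{zero}\mapsto\langle0\rangle$, $\mathsf{add}\mapsto\langle x_1+x_2\rangle$, $\mathsf{one}\mapsto\langle1\rangle$, $\mathsf{and}\mapsto\langle x_1x_2\rangle$. View a circuit as a directed graph whose nodes are wires and whose edges go from each input wire of a generator occurrence to each of its output wires. A circuit $c$ is safe if for every occurrence of $\mathsf{and}$ in $c$, there is no input port of $c$ from which both input ports of that $\mathsf{and}$ are reachable by a forward path. *)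

(* Defs.v *)
From HB Require Import structures.
From mathcomp Require Import all_boot all_algebra.
From mathcomp Require Import mpoly.
From Stdlib Require Import Relations.
Set Implicit Arguments. Unset Strict Implicit. Unset Printing Implicit Defensive.
Import GRing.Theory.
Local Open Scope ring_scope.

(* Circuits: syntactic terms of the free symmetric strict monoidal category
   on objects nat (tensor = +) generated by the six gates.
   Every morphism of the free SMC is denoted by such a term. *)
Inductive circ : nat -> nat -> Type :=
| Discard : circ 1 0
| Copy    : circ 1 2
| Zero    : circ 0 1
| Add     : circ 2 1
| One     : circ 0 1
| And     : circ 2 1
| Idc     : forall n, circ n n
| Sym     : forall m n, circ (m + n) (n + m)
| Comp    : forall a b c, circ a b -> circ b c -> circ a c
| Tens    : forall a b c d, circ a b -> circ c d -> circ (a + c) (b + d).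

Definition F2 := 'F_2.

(* variables x_1..x_a are 'X_0 .. 'X_(a-1) *)
Fixpoint sem a b (f : circ a b) : 'I_b -> {mpoly F2[a]} :=
  match f in circ a b return 'I_b -> {mpoly F2[a]} with
  | Discard => fun _ => 0
  | Copy => fun _ => 'X_(@ord0 0)
  | Zero => fun _ => 0
  | Add => fun _ => 'X_(@ord0 1) + 'X_(@ord_max 1)
  | One => fun _ => 1
  | And => fun _ => 'X_(@ord0 1) * 'X_(@ord_max 1)
  | Idc n => fun i => 'X_i
  | Sym m n => fun k =>
      match split k with
      | inl i => 'X_(rshift m i)
      | inr j => 'X_(lshift n j)
      end
  | Comp a b c f g => fun k => comp_mpoly (mktuple (sem f)) (sem g k)
  | Tens a b c d f g => fun k =>
      match split k with
      | inl i => comp_mpoly (mktuple (fun l : 'I_a => 'X_(lshift c l))) (sem f i)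
      | inr j => comp_mpoly (mktuple (fun l : 'I_c => 'X_(rshift a l))) (sem g j)
      end
  end.

(* ---- The wire graph of a circuit ----
   Wires are numbered by nat.  [build f ins fr] lays out the circuit f whose
   input wires are [ins], using fresh wire names >= fr.  Identities and symmetries create no
   new wires (they only route/permute existing wires), as in the free SMC. *)
Record layout := Layout {
  l_outs : seq nat; l_edges : seq (nat * nat); l_ands : seq (nat * nat);
  l_fresh : nat }.

Definition gate (ins : seq nat) (nout : nat) (fr : nat) : layout :=
  let outs := iota fr nout in
  Layout outs [seq (i, o) | i <- ins, o <- outs] [::] (fr + nout).

Fixpoint build a b (f : circ a b) (ins : seq nat) (fr : nat) : layout :=
  match f with
  | Discard => gate ins 0 fr
  | Copy => gate ins 2 fr
  | Zero => gate ins 1 fr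
  | Add => gate ins 1 fr
  | One => gate ins 1 fr
  | And => let L := gate ins 1 fr in
           Layout (l_outs L) (l_edges L) [:: (nth 0%N ins 0, nth 0%N ins 1)]
                  (l_fresh L)
  | Idc n => Layout ins [::] [::] fr
  | Sym m n => Layout (drop m ins ++ take m ins) [::] [::] fr
  | Comp a b c f g =>
      let L1 := build f ins fr in
      let L2 := build g (l_outs L1) (l_fresh L1) in
      Layout (l_outs L2) (l_edges L1 ++ l_edges L2) (l_ands L1 ++ l_ands L2)
             (l_fresh L2)
  | Tens a b c d f g =>
      let L1 := build f (take a ins) fr in
      let L2 := build g (drop a ins) (l_fresh L1) in
      Layout (l_outs L1 ++ l_outs L2) (l_edges L1 ++ l_edges L2)
             (l_ands L1 ++ l_ands L2) (l_fresh L2)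
  end.

Definition graph a b (f : circ a b) : layout := build f (iota 0 a) a.

Definition reach a b (f : circ a b) : relation nat :=
  clos_refl_trans nat (fun u v => (u, v) \in l_edges (graph f)).

Definition safe a b (f : circ a b) : Prop :=
  forall p q, (p, q) \in l_ands (graph f) ->
  forall i : nat, (i < a)%N -> ~ (reach f i p /\ reach f i q).

Definition multilinear n (p : {mpoly F2[n]}) : Prop :=
  forall m, m \in msupp p -> forall i : 'I_n, (m i <= 1)%N.

(* Main.v *)
Require Import Defs.
From mathcomp Require Import all_boot all_algebra.
From mathcomp Require Import mpoly.
From Stdlib Require Import Relations.
Set Implicit Arguments. Unset Strict Implicit. Unset Printing Implicit Defensive.
Import GRing.Theory.
Local Open Scope ring_scope.

Lemma comp_assoc n m k (P : m.-tuple {mpoly F2[k]}) (Q : n.-tuple {mpoly F2[m]}) r :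
  comp_mpoly P (comp_mpoly Q r) = comp_mpoly [tuple comp_mpoly P (tnth Q j) | j < n] r.
Proof.
rewrite (comp_mpolyEX r Q) (comp_mpolyEX r) raddf_sum; apply: eq_bigr => mm _.
rewrite /= comp_mpolyZ; congr (_ *: _).
rewrite !comp_mpolyX rmorph_prod; apply: eq_bigr => i _.
by rewrite rmorphXn tnth_mktuple.
Qed.

Lemma size_build a b (f : circ a b) ins fr :
  size ins = a -> size (l_outs (build f ins fr)) = b.
Proof.
elim: f ins fr => //=; try by move=> ins fr _; rewrite size_iota.
- move=> m n ins fr Hs; rewrite size_cat size_drop size_take Hs.
  rewrite addKn; case: ltnP => h; first by rewrite addnC.
  have h0 : n = 0%N by move: h; rewrite -{2}(addn0 m) leq_add2l; case: (n).
  by rewrite h0 addn0.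
- move=> ? ? ? f IHf g IHg ins fr Hs; exact/IHg/IHf.
- move=> a0 b0 c d f IHf g IHg ins fr Hs; rewrite size_cat IHf ?IHg //.
    by rewrite size_drop Hs addKn.
  rewrite size_take Hs; case: ltnP => // h.
  by apply/eqP; rewrite eqn_leq h leq_addr.
Qed.

Definition good N (R : nat -> nat -> Prop) (p : {mpoly F2[N]}) (w : nat) :=
  forall m, m \in msupp p -> forall i : 'I_N, (m i <= 1)%N /\ ((0 < m i)%N -> R i w).

Section Good.
Variables (N : nat) (R : nat -> nat -> Prop).
Implicit Types p q : {mpoly F2[N]}.

Lemma good0 w : good R (0 : {mpoly F2[N]}) w.
Proof. by move=> m; rewrite mcoeff_msupp mcoeff0 eqxx. Qed.

Lemma good1 w : good R (1 : {mpoly F2[N]}) w.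
Proof.
move=> m; rewrite mcoeff_msupp mcoeff1; have [-> _ i|] := eqVneq m 0%MM; last by rewrite eqxx.
by rewrite mnm0E.
Qed.

Lemma goodX (j : 'I_N) w : R j w -> good R 'X_j w.
Proof.
move=> Hj m; rewrite msuppX inE => /eqP -> i; rewrite mnm1E.
by case: (j =P i) => [<-|_].
Qed.

Lemma good_mono p w w' : (forall i, R i w -> R i w') -> good R p w -> good R p w'.
Proof. by move=> H Hp m /Hp Hm i; case: (Hm i) => h1 h2; split=> // /h2 /H. Qed.

Lemma goodD p q w : good R p w -> good R q w -> good R (p + q) w.
Proof. by move=> Hp Hq m /msuppD_le; rewrite mem_cat => /orP [/Hp|/Hq]. Qed.

Lemma goodM p q u1 u2 w : good R p u1 -> good R q u2 ->
  (forall i : 'I_N, ~ (R i u1 /\ R i u2)) ->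
  (forall i, R i u1 -> R i w) -> (forall i, R i u2 -> R i w) ->
  good R (p * q) w.
Proof.
move=> Hp Hq Hd H1 H2 m /msuppM_le /allpairsP [[m1 m2] /= [/Hp h1 /Hq h2 ->]] i.
rewrite mnmDE; case: (h1 i) (h2 i) => a1 b1 [a2 b2].
case: (posnP (m1 i)) => e1; case: (posnP (m2 i)) => e2.
- by rewrite e1 e2.
- by rewrite e1 add0n; split=> // /b2 /H2.
- by rewrite e2 addn0; split=> // /b1 /H1.
- by case: (Hd i); split; [apply: b1|apply: b2].
Qed.

End Good.

Lemma gate_edge (ins : seq nat) nout fr j k :
  (j < size ins)%N -> (k < nout)%N ->
  (nth 0%N ins j, nth 0%N (iota fr nout) k) \in l_edges (gate ins nout fr).
Proof.
move=> hj hk; apply/allpairsP; exists (nth 0%N ins j, nth 0%N (iota fr nout) k) => /=.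
by rewrite !mem_nth ?size_iota.
Qed.

Lemma key N (R : nat -> nat -> Prop) a b (f : circ a b) ins fr (P : a.-tuple {mpoly F2[N]}) :
  size ins = a ->
  (forall i u v, (u,v) \in l_edges (build f ins fr) -> R i u -> R i v) ->
  (forall p q, (p,q) \in l_ands (build f ins fr) -> forall i : 'I_N, ~ (R i p /\ R i q)) ->
  (forall j : 'I_a, good R (tnth P j) (nth 0%N ins j)) ->
  forall k : 'I_b, good R (comp_mpoly P (sem f k)) (nth 0%N (l_outs (build f ins fr)) k).
Proof.
elim: f ins fr P.
- by move=> ins fr P _ _ _ _ [].
- move=> ins fr P Hs He Ha Hg k; rewrite comp_mpolyXU -(tnth_nth 0 P).
  apply: good_mono (Hg ord0) => i; apply: He; apply: (@gate_edge ins 2 fr) => //; by rewrite Hs.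
- by move=> ins fr P _ _ _ _ k; rewrite comp_mpoly0; apply: good0.
- move=> ins fr P Hs He Ha Hg k; rewrite comp_mpolyD !comp_mpolyXU -!(tnth_nth 0 P).
  apply: goodD; [apply: good_mono (Hg ord0)|apply: good_mono (Hg ord_max)] => i;
    apply: He; apply: (@gate_edge ins 1 fr) => //; by rewrite Hs.
- by move=> ins fr P _ _ _ _ k; rewrite comp_mpoly1; apply: good1.
- move=> ins fr P Hs He Ha Hg k; rewrite rmorphM /= !comp_mpolyXU -!(tnth_nth 0 P).
  apply: goodM (Hg ord0) (Hg ord_max) _ _ _.
  + by apply: Ha; rewrite inE.
  + by move=> i; apply: He; apply: (@gate_edge ins 1 fr) => //; rewrite Hs.
  + by move=> i; apply: He; apply: (@gate_edge ins 1 fr) => //; rewrite Hs.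
- by move=> n ins fr P _ _ _ Hg k; rewrite comp_mpolyXU -(tnth_nth 0 P).
- move=> m n ins fr P Hs _ _ Hg k.
  rewrite /=; case: (splitP k) => [i|j] Hk /=; rewrite comp_mpolyXU -(tnth_nth 0 P).
  + have -> : nth 0%N (drop m ins ++ take m ins) k = nth 0%N ins (rshift m i).
      by rewrite nth_cat size_drop Hs addKn Hk ltn_ord nth_drop.
    exact: Hg.
  + have -> : nth 0%N (drop m ins ++ take m ins) k = nth 0%N ins (lshift n j).
      by rewrite nth_cat size_drop Hs addKn Hk ltnNge leq_addr /= addKn nth_take.
    exact: Hg.
- move=> a0 b0 c f IHf g IHg ins fr P Hs He Ha Hg k.
  rewrite comp_assoc; apply: IHg.
  + by rewrite (size_build _ _ Hs).
  + by move=> i u v huv; apply: He; rewrite mem_cat huv orbT.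
  + by move=> p q hpq; apply: Ha; rewrite mem_cat hpq orbT.
  + move=> j; rewrite !tnth_mktuple; apply: IHf => //.
    * by move=> i u v huv; apply: He; rewrite mem_cat huv.
    * by move=> p q hpq; apply: Ha; rewrite mem_cat hpq.
- move=> a0 b0 c d f IHf g IHg ins fr P Hs He Ha Hg k.
  have Ht : size (take a0 ins) = a0.
    by rewrite size_take Hs; case: ltnP => // h; apply/eqP; rewrite eqn_leq h leq_addr.
  have Hd : size (drop a0 ins) = c by rewrite size_drop Hs addKn.
  rewrite /=; case: (splitP k) => [i|j] Hk /=; rewrite comp_assoc.
  + rewrite nth_cat (size_build _ _ Ht) Hk ltn_ord.
    apply: IHf => //.
    * by move=> i0 u v huv; apply: He; rewrite /= mem_cat huv.
    * by move=> p q hpq; apply: Ha; rewrite /= mem_cat hpq.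
    * by move=> j0; rewrite !tnth_mktuple comp_mpolyXU -(tnth_nth 0 P) nth_take //; exact: Hg.
  + rewrite nth_cat (size_build _ _ Ht) Hk ltnNge leq_addr /= addKn.
    apply: IHg => //.
    * by move=> i0 u v huv; apply: He; rewrite /= mem_cat huv orbT.
    * by move=> p q hpq; apply: Ha; rewrite /= mem_cat hpq orbT.
    * by move=> j0; rewrite !tnth_mktuple comp_mpolyXU -(tnth_nth 0 P) nth_drop; exact: Hg.
Qed.

Theorem mainTheorem7 (a b : nat) (f : circ a b) :
  safe f -> forall k : 'I_b, multilinear (sem f k).
Proof.
move=> Hsafe k m Hm i.
have H := @key a (reach f) a b f (iota 0 a) a [tuple 'X_i | i < a] (size_iota _ _).
have {}H := H _ _ _ k; rewrite comp_mpoly_id in H.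
case: (H _ _ _ m Hm i) => //.
- move=> i0 u v huv Hu; apply: rt_trans Hu _; exact: rt_step.
- move=> p q hpq i0 [H1 H2]; exact: (Hsafe p q hpq i0 (ltn_ord i0)).
- move=> j; rewrite tnth_mktuple nth_iota // add0n; apply: goodX; exact: rt_refl.
Qed.
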